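(* For every $n$-qubit pure state $\ket{\psi}$, $\mathcal{B}(\ket{\psi})\le\frac n4$, with equality for every $1$-uniform state. Moreover, every $2$-uniform $n$-qubit state $\ket{\phi}$ satisfies $\mathcal{B}(\ket{\phi})=\frac n4$ and $\mathrm{Var}_{\phi}\le\mathrm{Var}_{\psi}$ for every $n$-qubit pure state $\ket{\psi}$ with $\mathcal{B}(\ket{\psi})=\frac n4$.
   Context: Parallelized controlled-SWAP test: with $\mathbb{F}^{(i)}$ the swap of the $i$-th qubits of two copies of $\ket{\psi}$, the probability of outcome $\mathbf{z}\in\{0,1\}^n$ is $p_\psi(\mathbf{z})=\mathrm{Tr}\big[\big(\bigotimes_{i=1}^n\tfrac12(\mathbb{1}+(-1)^{z_i}\mathbb{F}^{(i)})\big)(\ket{\psi}\!\bra{\psi})^{\otimes 2}\big]$; each outcome $1$ heralds a Bell pair. The expected number of Bell pairs is $\mathcal{B}(\ket{\psi})=\sum_{\mathbf{z}}w(\mathbf{z})p_\psi(\mathbf{z})$ with $w$ the Hamming weight, and its variance is $\mathrm{Var}_\psi=\sum_{\mathbf{z}}w(\mathbf{z})^2p_\psi(\mathbf{z})-\mathcal{B}(\ket{\psi})^2$. A state is $k$-uniform if all its reduced density matrices on $k$ or fewer qubits are maximally mixed. *)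

(* Defs.v *)
(* Amplitudes live in an arbitrary numClosedFieldType C
   (this includes the complex numbers, e.g. R[i] for R : rcfType / realType). *)
From HB Require Import structures.
From mathcomp Require Import all_boot all_order all_algebra.
Set Implicit Arguments. Unset Strict Implicit. Unset Printing Implicit Defensive.
Import Order.TTheory GRing.Theory Num.Theory.
Local Open Scope ring_scope.

Section QubitDefs.
Variable C : numClosedFieldType.

(* computational basis of n qubits: bit strings z : 'I_n -> bool *)
Definition qubits (n : nat) := {ffun 'I_n -> bool}.

Definition ket (n : nat) := qubits n -> C.

Definition is_state n (psi : ket n) : Prop :=
  \sum_(x : qubits n) `|psi x| ^+ 2 = 1.

Definition op (T : finType) := T -> T -> C.
Definition idop (T : finType) : op T := fun a b => (a == b)%:R.
Definition mulop (T : finType) (A B : op T) : op T :=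
  fun a c => \sum_(b : T) A a b * B b c.
Definition trop (T : finType) (A : op T) : C := \sum_(a : T) A a a.

Definition two_copies n := (qubits n * qubits n)%type.

Definition swap_at n (i : 'I_n) (a : two_copies n) : two_copies n :=
  ([ffun j => if j == i then a.2 j else a.1 j],
   [ffun j => if j == i then a.1 j else a.2 j]).

Definition Fswap n (i : 'I_n) : op (two_copies n) :=
  fun a b => (a == swap_at i b)%:R.

Definition proj_i n (i : 'I_n) (zi : bool) : op (two_copies n) :=
  fun a b => (idop a b + (-1) ^+ zi * Fswap i a b) / 2.

(* tensor product over i of the projectors acting on the i-th qubit pairs:
   the product of their (commuting) embeddings *)
Definition Pz n (z : qubits n) : op (two_copies n) :=
  foldr (fun i A => mulop (proj_i i (z i)) A) (@idop _) (enum 'I_n).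

(* (|psi><psi|)^{\otimes 2} *)
Definition rho2 n (psi : ket n) : op (two_copies n) :=
  fun a b => (psi a.1 * psi a.2) * Num.conj (psi b.1 * psi b.2).

(* outcome probability of the parallelized controlled-SWAP test *)
Definition p_out n (psi : ket n) (z : qubits n) : C :=
  trop (mulop (Pz z) (rho2 psi)).

Definition hweight n (z : qubits n) : nat := #|[pred i | z i]|.

Definition Bell_exp n (psi : ket n) : C :=
  \sum_(z : qubits n) (hweight z)%:R * p_out psi z.

Definition Bell_var n (psi : ket n) : C :=
  \sum_(z : qubits n) ((hweight z)%:R ^+ 2) * p_out psi z - Bell_exp psi ^+ 2.

Definition glue n (A : {set 'I_n})
  (a : {ffun {i : 'I_n | i \in A} -> bool})
  (e : {ffun {i : 'I_n | i \notin A} -> bool}) : qubits n :=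
  [ffun j => match insub j : option {i : 'I_n | i \in A} with
             | Some j' => a j'
             | None => match insub j : option {i : 'I_n | i \notin A} with
                       | Some j'' => e j''
                       | None => false
                       end
             end].

Definition rdm n (psi : ket n) (A : {set 'I_n})
  (a a' : {ffun {i : 'I_n | i \in A} -> bool}) : C :=
  \sum_(e : {ffun {i : 'I_n | i \notin A} -> bool})
     psi (glue a e) * Num.conj (psi (glue a' e)).

Arguments glue {n} A a e.
Arguments rdm {n} psi A a a'.

Definition k_uniform n (psi : ket n) (k : nat) : Prop :=
  forall A : {set 'I_n}, (#|A| <= k)%N ->
  forall a a' : {ffun {i : 'I_n | i \in A} -> bool},
    rdm psi A a a' = (a == a')%:R / 2 ^+ #|A|.

End QubitDefs.

(* Main.v *)
Require Import Defs.
From mathcomp Require Import all_boot all_order all_algebra.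
From mathcomp Require Import ring.
Set Implicit Arguments. Unset Strict Implicit. Unset Printing Implicit Defensive.
Import Order.TTheory GRing.Theory Num.Theory.
Local Open Scope ring_scope.

Section Aux.
Variable C : numClosedFieldType.
Variable n : nat.

Definition pr (a : two_copies n) (k : 'I_n) : bool * bool := (a.1 k, a.2 k).
Definition Eb (x y : bool * bool) : C := (x == y)%:R.
Definition Wb (x y : bool * bool) : C := (x == (y.2, y.1))%:R.
Definition pp (s : bool) x y : C := (Eb x y + (-1) ^+ s * Wb x y) / 2.

Lemma sum_delta (T : finType) (x : T) (F : T -> C) :
  \sum_b (x == b)%:R * F b = F x.
Proof.
rewrite (bigD1 x) //= eqxx mul1r big1 ?addr0 // => b /negbTE.
by rewrite eq_sym => ->; rewrite mul0r.
Qed.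

Lemma swap_atK (i : 'I_n) : involutive (@swap_at n i).
Proof.
move=> [a1 a2]; rewrite /swap_at /=; congr pair; apply/ffunP => j; rewrite !ffunE;
by case: eqP.
Qed.

Lemma eq_swap (i : 'I_n) (a b : two_copies n) :
  (a == swap_at i b) = (swap_at i a == b).
Proof.
apply/eqP/eqP => [->|<-]; by rewrite swap_atK.
Qed.

Lemma pr_sw (i k : 'I_n) (a : two_copies n) :
  pr (swap_at i a) k = if k == i then (a.2 i, a.1 i) else pr a k.
Proof. by rewrite /pr /swap_at /= !ffunE; case: eqP => [->|]. Qed.

Lemma prod_ind (a c : two_copies n) :
  \prod_k Eb (pr a k) (pr c k) = (a == c)%:R.
Proof.
case: (eqVneq a c) => [->|neq].
  by apply: big1 => k _; rewrite /Eb eqxx.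
case: (boolP [exists k, pr a k != pr c k]) => [/existsP [k Hk]| /existsPn H].
  by rewrite (bigD1 k) //= /Eb (negbTE Hk) mul0r.
exfalso; move/eqP: neq; apply.
case: a c H => [a1 a2] [c1 c2] H.
have H1 : forall k, a1 k = c1 k /\ a2 k = c2 k.
  by move=> k; have := H k; rewrite negbK /pr xpair_eqE /= => /andP[/eqP -> /eqP ->].
by congr pair; apply/ffunP => k; case: (H1 k).
Qed.

Lemma foldr_entry (z : qubits n) (s : seq 'I_n) : uniq s -> forall a c,
  foldr (fun i A => mulop (proj_i C i (z i)) A) (@idop C _) s a c =
  (\prod_(k | k \notin s) Eb (pr a k) (pr c k)) *
    \prod_(k <- s) pp (z k) (pr a k) (pr c k).
Proof.
elim: s => [_ a c|i s IH /andP[nis us] a c].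
  by rewrite big_nil mulr1 /= (eq_bigl predT) // prod_ind.
rewrite /= /mulop.
set A := foldr _ _ _.
have -> : \sum_b proj_i C i (z i) a b * A b c =
   (A a c + (-1) ^+ z i * A (swap_at i a) c) / 2.
  rewrite (eq_bigr (fun b => ((a == b)%:R * A b c) / 2 +
       ((-1) ^+ z i / 2) * ((swap_at i a == b)%:R * A b c))); last first.
    by move=> b _; rewrite /proj_i /Fswap /idop eq_swap; ring.
  by rewrite big_split /= -mulr_suml -mulr_sumr !sum_delta; ring.
rewrite /A !IH //.
have split_not : forall x : two_copies n,
   \prod_(k | k \notin s) Eb (pr x k) (pr c k) =
   Eb (pr x i) (pr c i) * \prod_(k | k \notin i :: s) Eb (pr x k) (pr c k).
  move=> x; rewrite (bigD1 i) //=; congr (_ * _); apply: eq_bigl => k.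
  by rewrite inE negb_or andbC.
rewrite !split_not.
have -> : \prod_(k | k \notin i :: s) Eb (pr (swap_at i a) k) (pr c k) =
          \prod_(k | k \notin i :: s) Eb (pr a k) (pr c k).
  apply: eq_bigr => k; rewrite inE negb_or => /andP[kni _].
  by rewrite pr_sw (negbTE kni).
have -> : \prod_(k <- s) pp (z k) (pr (swap_at i a) k) (pr c k) =
          \prod_(k <- s) pp (z k) (pr a k) (pr c k).
  apply: eq_big_seq => k ks; rewrite pr_sw; case: eqP => // ki.
  by move: nis; rewrite -ki ks.
have -> : Eb (pr (swap_at i a) i) (pr c i) = Wb (pr a i) (pr c i).
  rewrite pr_sw eqxx /Eb /Wb /pr /=; congr (_%:R).
  by rewrite !xpair_eqE andbC.
rewrite big_cons /pp; ring.
Qed.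

Lemma Pz_entry (z : qubits n) a c :
  Pz C z a c = \prod_k pp (z k) (pr a k) (pr c k).
Proof.
rewrite /Pz foldr_entry ?enum_uniq // big_pred0 ?mul1r ?big_enum //.
by move=> k; rewrite mem_enum.
Qed.


Definition Mq (Q : {set 'I_n}) (a b : two_copies n) : C :=
  \prod_k (if k \in Q then pp true (pr a k) (pr b k) else Eb (pr a k) (pr b k)).
Definition mQ (psi : ket C n) (Q : {set 'I_n}) : C :=
  \sum_a \sum_b Mq Q a b * rho2 psi b a.

Lemma moment (psi : ket C n) (Q : {set 'I_n}) :
  \sum_(z : qubits n) (\prod_(k in Q) ((z k)%:R : C)) * p_out psi z = mQ psi Q.
Proof.
rewrite /p_out /trop /mulop.
rewrite (eq_bigr (fun z : qubits n => \sum_a \sum_b ((\prod_(k in Q) ((z k)%:R : C)) * Pz C z a b) * rho2 psi b a)); last first.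
  move=> z _; rewrite mulr_sumr; apply: eq_bigr => a _; rewrite mulr_sumr.
  by apply: eq_bigr => b _; rewrite mulrA.
rewrite exchange_big; apply: eq_bigr => a _; rewrite exchange_big.
apply: eq_bigr => b _; rewrite -mulr_suml; congr (_ * _).
rewrite (eq_bigr (fun z : qubits n => \prod_k ((if k \in Q then ((z k)%:R : C) else 1) * pp (z k) (pr a k) (pr b k)))); last first.
  by move=> z _; rewrite Pz_entry [RHS]big_split /= -big_mkcond.
transitivity (\prod_k \sum_(bit : bool) (if k \in Q then (bit%:R : C) else 1) * pp bit (pr a k) (pr b k)).
  by rewrite bigA_distr_bigA.
rewrite /Mq; apply: eq_bigr => k _; rewrite big_bool /=.
case: (k \in Q); rewrite /pp /Eb /Wb /= ?expr0 ?expr1;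
  first ring; by field.
Qed.


Definition swapS (S : {set 'I_n}) (b : two_copies n) : two_copies n :=
  ([ffun j => if j \in S then b.2 j else b.1 j],
   [ffun j => if j \in S then b.1 j else b.2 j]).
Definition Nq (S : {set 'I_n}) (a b : two_copies n) : C :=
  \prod_k (if k \in S then Wb (pr a k) (pr b k) else Eb (pr a k) (pr b k)).
Definition TS (psi : ket C n) (S : {set 'I_n}) : C :=
  \sum_a \sum_b Nq S a b * rho2 psi b a.

Lemma Nq_ind S a b : Nq S a b = (a == swapS S b)%:R.
Proof.
rewrite -prod_ind; apply: eq_bigr => k _; rewrite /pr /swapS /= !ffunE.
by case: (k \in S).
Qed.

Lemma TS_swap psi S : TS psi S = \sum_b rho2 psi b (swapS S b).
Proof.
rewrite /TS exchange_big; apply: eq_bigr => b _.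
rewrite -(sum_delta (swapS S b) (fun a => rho2 psi b a)).
by apply: eq_bigr => a _; rewrite Nq_ind eq_sym.
Qed.

Lemma prod_rest (S : {set 'I_n}) (P : pred 'I_n) (F G : 'I_n -> C) :
  (forall k, P k -> k \notin S) ->
  \prod_(k | P k) (if k \in S then F k else G k) = \prod_(k | P k) G k.
Proof. by move=> H; apply: eq_bigr => k /H /negbTE ->. Qed.

Lemma prod1 (F : 'I_n -> C) i : \prod_k F k = F i * \prod_(k | k != i) F k.
Proof. by rewrite (bigD1 i). Qed.

Lemma Mq_1 i a b : Mq [set i] a b = (Nq set0 a b - Nq [set i] a b) / 2.
Proof.
rewrite /Mq /Nq !(prod1 _ i) !in_set1 eqxx in_set0.
have R1 : forall (S : {set 'I_n}), (forall k, k != i -> k \notin S) ->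
  forall F G : 'I_n -> C, \prod_(k | k != i) (if k \in S then F k else G k) = \prod_(k | k != i) G k.
  by move=> S HS F G; apply: prod_rest.
have H1 : forall k, k != i -> k \notin [set i] by move=> k; rewrite in_set1.
have H0 : forall k, k != i -> k \notin (set0 : {set 'I_n}) by move=> k; rewrite in_set0.
rewrite !(R1 _ H1) !(R1 _ H0).
by rewrite /pp expr1; ring.
Qed.

Lemma prod2 (F : 'I_n -> C) i j : i != j ->
  \prod_k F k = F i * F j * \prod_(k | (k != i) && (k != j)) F k.
Proof.
move=> ij; have ji : j != i by rewrite eq_sym.
have D : forall (P : pred 'I_n) (G : 'I_n -> C) l, P l ->
   \prod_(k | P k) G k = G l * \prod_(k | P k && (k != l)) G k.
  by move=> P G l Pl; apply: bigD1.
by rewrite (prod1 _ i) (D (fun k => k != i) _ j ji) mulrA.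
Qed.

Lemma Mq_2 i j a b : i != j -> Mq [set i; j] a b =
  (Nq set0 a b - Nq [set i] a b - Nq [set j] a b + Nq [set i; j] a b) / 4.
Proof.
move=> ij; have ji : j != i by rewrite eq_sym.
rewrite /Mq /Nq !(prod2 _ ij) !in_set2 !in_set1 !in_set0 !eqxx (negbTE ij) (negbTE ji).
have H : forall S : {set 'I_n}, (forall k, k \in S -> (k == i) || (k == j)) ->
  forall F : 'I_n -> C, \prod_(k | (k != i) && (k != j)) (if k \in S then F k else Eb (pr a k) (pr b k))
    = \prod_(k | (k != i) && (k != j)) Eb (pr a k) (pr b k).
  move=> S HS F; apply: prod_rest => k /andP[ki kj]; apply/negP => /HS.
  by rewrite (negbTE ki) (negbTE kj).
have Hij : forall k, k \in [set i; j] -> (k == i) || (k == j) by move=> k; rewrite in_set2.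
have Hi : forall k, k \in [set i] -> (k == i) || (k == j) by move=> k; rewrite in_set1 => ->.
have Hj : forall k, k \in [set j] -> (k == i) || (k == j) by move=> k; rewrite in_set1 => ->; rewrite orbT.
have H0 : forall k, k \in (set0 : {set 'I_n}) -> (k == i) || (k == j) by move=> k; rewrite in_set0.
rewrite !(H _ Hij) (H _ Hi) (H _ Hj) (H _ H0).
rewrite /pp expr1.
set R := \prod_(k | _) _; set e1 := Eb _ _; set e2 := Eb _ _; set w1 := Wb _ _; set w2 := Wb _ _.
have -> : (4 : C) = 2 * 2 by rewrite -natrM.
rewrite invfM /=; ring.
Qed.

Lemma m1 psi i : mQ psi [set i] = (TS psi set0 - TS psi [set i]) / 2.
Proof.
rewrite /mQ /TS -sumrB mulr_suml; apply: eq_bigr => a _.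
rewrite -sumrB mulr_suml; apply: eq_bigr => b _.
by rewrite Mq_1; ring.
Qed.

Lemma m2 psi i j : i != j -> mQ psi [set i; j] =
  (TS psi set0 - TS psi [set i] - TS psi [set j] + TS psi [set i; j]) / 4.
Proof.
move=> ij; rewrite /mQ /TS -!sumrB -big_split mulr_suml; apply: eq_bigr => a _.
rewrite -!sumrB -big_split mulr_suml; apply: eq_bigr => b _.
by rewrite Mq_2 //=; ring.
Qed.

Lemma TS0 psi : TS psi set0 = (\sum_q `|psi q| ^+ 2) ^+ 2.
Proof.
rewrite TS_swap.
transitivity (\sum_(b : two_copies n) (`|psi b.1| ^+ 2 * `|psi b.2| ^+ 2)).
  apply: eq_bigr => -[x y] _.
  have -> : swapS set0 (x, y) = (x, y).
    by rewrite /swapS; congr pair; apply/ffunP => j; rewrite !ffunE in_set0.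
  by rewrite /rho2 /= -normCK normrM exprMn.
rewrite -(pair_bigA _ (fun x y => `|psi x| ^+ 2 * `|psi y| ^+ 2)) expr2 mulr_suml.
by apply: eq_bigr => x _; rewrite mulr_sumr.
Qed.

Section Glue.
Variable S : {set 'I_n}.
Local Notation SA := {ffun {i : 'I_n | i \in S} -> bool}.
Local Notation SB := {ffun {i : 'I_n | i \notin S} -> bool}.

Definition resA (q : qubits n) : SA := [ffun u => q (val u)].
Definition resB (q : qubits n) : SB := [ffun u => q (val u)].

Lemma glue_res q : glue (resA q) (resB q) = q.
Proof.
apply/ffunP => j; rewrite /glue ffunE.
case: insubP => [u Hj Hu | Hj]; first by rewrite ffunE Hu.
case: insubP => [u Hj' Hu | Hj']; first by rewrite ffunE Hu.
by rewrite Hj in Hj'.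
Qed.

Lemma res_glueA (x : SA) (e : SB) : resA (glue x e) = x.
Proof.
apply/ffunP => u; rewrite !ffunE.
case: insubP => [u' _ Hu | Hn]; first by congr (x _); apply: val_inj.
by rewrite (valP u) in Hn.
Qed.

Lemma res_glueB (x : SA) (e : SB) : resB (glue x e) = e.
Proof.
apply/ffunP => u; rewrite !ffunE.
case: insubP => [u' Hin _ | _]; first by have := valP u; rewrite Hin.
case: insubP => [u' _ Hu | Hn]; first by congr (e _); apply: val_inj.
by rewrite (valP u) in Hn.
Qed.

Lemma glue_inS (x : SA) (e e' : SB) j : j \in S -> glue x e j = glue x e' j.
Proof.
move=> jS; rewrite /glue !ffunE; case: insubP => [u _ _ | Hn] //.
by rewrite jS in Hn.
Qed.

Lemma glue_notinS (x x' : SA) (e : SB) j : j \notin S -> glue x e j = glue x' e j.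
Proof.
move=> jS; rewrite /glue !ffunE; case: insubP => [u Hj _ | Hn] //.
by rewrite Hj in jS.
Qed.

Lemma sum_glue (F : qubits n -> C) :
  \sum_(q : qubits n) F q = \sum_(x : SA) \sum_(e : SB) F (glue x e).
Proof.
rewrite pair_bigA (reindex (fun p : SA * SB => @glue n S p.1 p.2)) //.
apply: onW_bij; exists (fun q => (resA q, resB q)).
  by move=> [x e]; rewrite /= res_glueA res_glueB.
by move=> q; rewrite /= glue_res.
Qed.

Lemma swapS_glue (x y : SA) (e e' : SB) :
  swapS S (glue x e, glue y e') = (glue y e, glue x e').
Proof.
rewrite /swapS /=; congr pair; apply/ffunP => j; rewrite [LHS]ffunE;
  case: (boolP (j \in S)) => jS.
- exact: glue_inS.
- exact: glue_notinS.
- exact: glue_inS.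
- exact: glue_notinS.
Qed.

Lemma TS_rdm (psi : ket C n) :
  TS psi S = \sum_(x : SA) \sum_(y : SA) `|rdm psi x y| ^+ 2.
Proof.
rewrite TS_swap.
transitivity (\sum_(b1 : qubits n) \sum_(b2 : qubits n) rho2 psi (b1, b2) (swapS S (b1, b2))).
  by rewrite pair_bigA; apply: eq_bigr => -[b1 b2].
rewrite sum_glue; apply: eq_bigr => x _.
under eq_bigr => e _ do rewrite sum_glue.
rewrite exchange_big; apply: eq_bigr => y _.
rewrite normCK /rdm rmorph_sum mulr_suml; apply: eq_bigr => e _.
rewrite mulr_sumr; apply: eq_bigr => e' _.
rewrite swapS_glue /rho2 /= !rmorphM /= conjCK; ring.
Qed.

End Glue.

Lemma sum_cst (T : finType) (c : C) : \sum_(x : T) c = #|T|%:R * c.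
Proof. by rewrite sumr_const mulr_natl. Qed.

Lemma CS (T : finType) (u : T -> C) : (forall x, 0 <= u x) ->
  (\sum_x u x) ^+ 2 <= #|T|%:R * \sum_x u x ^+ 2.
Proof.
move=> u0.
set Su := \sum_x u x; set Su2 := \sum_x u x ^+ 2.
have inner : forall x, \sum_y (u x - u y) ^+ 2 =
    #|T|%:R * u x ^+ 2 - (2 * u x) * Su + Su2.
  move=> x; rewrite (eq_bigr (fun y => (u x ^+ 2 - (2 * u x) * u y) + u y ^+ 2)); last first.
    by move=> y _; ring.
  rewrite big_split /= sumrB (sum_cst _ (u x ^+ 2)) -(mulr_sumr _ _ _ (2 * u x)) -/Su -/Su2; ring.
have E : \sum_x \sum_y (u x - u y) ^+ 2 = 2 * (#|T|%:R * Su2 - Su ^+ 2).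
  rewrite (eq_bigr _ (fun x _ => inner x)) big_split sumrB /=.
  rewrite -(mulr_sumr _ _ _ (#|T|%:R)) (sum_cst _ Su2) -/Su2.
  rewrite (eq_bigr (fun x => (2 * Su) * u x)); last by move=> x _; ring.
  rewrite -(mulr_sumr _ _ _ (2 * Su)) -/Su; ring.
have : 0 <= \sum_x \sum_y (u x - u y) ^+ 2.
  apply: sumr_ge0 => x _; apply: sumr_ge0 => y _.
  by rewrite -real_normK ?exprn_ge0 // realB ?ger0_real.
by rewrite E pmulr_rge0 // subr_ge0.
Qed.

Lemma card_SA (S : {set 'I_n}) : #|{ffun {i : 'I_n | i \in S} -> bool}| = (2 ^ #|S|)%N.
Proof. by rewrite card_ffun card_bool card_sig. Qed.

Lemma rdm_diag (psi : ket C n) (S : {set 'I_n}) x :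
  rdm psi (A := S) x x = \sum_e `|psi (glue x e)| ^+ 2.
Proof. by rewrite /rdm; apply: eq_bigr => e _; rewrite normCK. Qed.

Lemma two_pos k : 0 < (2 : C) ^+ k.
Proof. by apply: exprn_gt0; rewrite ltr0n. Qed.

Lemma TS_ge (psi : ket C n) (S : {set 'I_n}) :
  is_state psi -> 1 / 2 ^+ #|S| <= TS psi S.
Proof.
move=> st; rewrite (TS_rdm S).
have u0 : forall x, 0 <= rdm psi (A := S) x x.
  by move=> x; rewrite rdm_diag; apply: sumr_ge0 => e _; apply: exprn_ge0.
have su : \sum_x rdm psi (A := S) x x = 1.
  under eq_bigr do rewrite rdm_diag.
  by rewrite -(sum_glue S (fun q => `|psi q| ^+ 2)).
have cs := CS u0; rewrite su expr1n card_SA natrX in cs.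
apply: (le_trans (y := \sum_x rdm psi (A := S) x x ^+ 2)).
  by rewrite mul1r -[_^-1]mulr1 ler_pdivrMl ?two_pos.
apply: ler_sum => x _; rewrite (bigD1 x) //= ger0_norm // lerDl.
by apply: sumr_ge0 => y _; apply: exprn_ge0.
Qed.

Lemma TS_unif (psi : ket C n) (S : {set 'I_n}) k :
  k_uniform psi k -> (#|S| <= k)%N -> TS psi S = 1 / 2 ^+ #|S|.
Proof.
move=> ku Sk; rewrite (TS_rdm S).
have c0 : (2 : C) ^+ #|S| != 0 by rewrite gt_eqF ?two_pos.
rewrite (eq_bigr (fun x => (1 / 2 ^+ #|S|) ^+ 2)); last first.
  move=> x _; rewrite (bigD1 x) //= ku // eqxx big1 ?addr0.
    by rewrite ger0_norm // divr_ge0 // ltW ?two_pos.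
  by move=> y yx; rewrite ku // eq_sym (negbTE yx) mul0r normr0 expr0n.
by rewrite sum_cst card_SA natrX; field.
Qed.

Lemma hw (z : qubits n) : ((hweight z)%:R : C) = \sum_i ((z i)%:R : C).
Proof.
rewrite /hweight -sum1_card big_mkcond natr_sum; apply: eq_bigr => i _.
by rewrite inE /=; case: (z i).
Qed.

Lemma Bell_m (psi : ket C n) : Bell_exp psi = \sum_i mQ psi [set i].
Proof.
rewrite /Bell_exp.
rewrite (eq_bigr (fun z : qubits n => \sum_i (\prod_(k in [set i]) ((z k)%:R : C)) * p_out psi z)); last first.
  by move=> z _; rewrite hw mulr_suml; apply: eq_bigr => i _; rewrite big_set1.
by rewrite exchange_big; apply: eq_bigr => i _; rewrite moment.
Qed.

Lemma prod_pair (z : qubits n) i j :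
  \prod_(k in [set i; j]) ((z k)%:R : C) = (z i)%:R * (z j)%:R.
Proof.
case: (eqVneq i j) => [<-|ij].
  by rewrite setUid big_set1; case: (z i); rewrite ?mulr1 ?mulr0.
by rewrite big_setU1 ?big_set1 // in_set1.
Qed.

Lemma Bell2_m (psi : ket C n) :
  \sum_z ((hweight z)%:R ^+ 2) * p_out psi z = \sum_i \sum_j mQ psi [set i; j].
Proof.
rewrite (eq_bigr (fun z : qubits n => \sum_i \sum_j (\prod_(k in [set i; j]) ((z k)%:R : C)) * p_out psi z)); last first.
  move=> z _; rewrite hw expr2 -mulrA mulr_suml; apply: eq_bigr => i _.
  rewrite mulr_suml mulr_sumr; apply: eq_bigr => j _.
  by rewrite prod_pair mulrA.
rewrite exchange_big; apply: eq_bigr => i _.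
by rewrite exchange_big; apply: eq_bigr => j _; rewrite moment.
Qed.

Lemma TS0_state (psi : ket C n) : is_state psi -> TS psi set0 = 1.
Proof. by move=> st; rewrite TS0 st expr1n. Qed.

End Aux.

Theorem corollary3 (C : numClosedFieldType) (n : nat) :
  (forall psi : ket C n, is_state psi -> Bell_exp psi <= n%:R / 4) /\
  (forall psi : ket C n, is_state psi -> k_uniform psi 1 ->
     Bell_exp psi = n%:R / 4) /\
  (forall phi : ket C n, is_state phi -> k_uniform phi 2 ->
     Bell_exp phi = n%:R / 4 /\
     (forall psi : ket C n, is_state psi -> Bell_exp psi = n%:R / 4 ->
        Bell_var phi <= Bell_var psi)).
Proof.
have nq : (n%:R / 4 : C) = \sum_(i < n) 1 / 4 by rewrite sum_cst card_ord mul1r.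
have m1S : forall psi : ket C n, is_state psi -> forall i,
    mQ psi [set i] = (1 - TS psi [set i]) / 2.
  by move=> psi st i; rewrite m1 TS0_state.
have part1 : forall psi : ket C n, is_state psi -> forall i, mQ psi [set i] <= 1 / 4.
  move=> psi st i; rewrite m1S //.
  have := TS_ge [set i] st; rewrite cards1 expr1 => H.
  rewrite -subr_ge0.
  have -> : 1 / 4 - (1 - TS psi [set i]) / 2 = (TS psi [set i] - 1 / 2) / 2 by field.
  by rewrite divr_ge0 ?ler0n // subr_ge0.
have part2 : forall psi : ket C n, is_state psi -> k_uniform psi 1 -> forall i,
    mQ psi [set i] = 1 / 4.
  move=> psi st ku i; rewrite m1S // (TS_unif ku) cards1 // expr1; by field.
split.
  by move=> psi st; rewrite Bell_m nq; apply: ler_sum => i _; apply: part1.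
split.
  by move=> psi st ku; rewrite Bell_m nq; apply: eq_bigr => i _; apply: part2.
move=> phi st ku2.
have ku1 : k_uniform phi 1.
  by move=> A HA; apply: ku2; apply: leq_trans HA _.
have Bphi : Bell_exp phi = n%:R / 4.
  by rewrite Bell_m nq; apply: eq_bigr => i _; apply: part2.
split => // psi stp Bpsi.
have mpsi : forall i, mQ psi [set i] = 1 / 4.
  move=> i; apply/eqP; rewrite eq_sym -subr_eq0; apply/eqP.
  apply: (psumr_eq0P (P := predT) (F := fun i => 1/4 - mQ psi [set i])) => //.
    by move=> k _; rewrite subr_ge0; apply: part1.
  by rewrite sumrB -nq -Bell_m Bpsi subrr.
have tpsi : forall i, TS psi [set i] = 1 / 2.
  move=> i; have := mpsi i; rewrite m1S // => H.
  have -> : TS psi [set i] = 1 - 2 * ((1 - TS psi [set i]) / 2) by field.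
  by rewrite H; field.
rewrite /Bell_var !Bell2_m Bphi Bpsi lerD2r.
apply: ler_sum => i _; apply: ler_sum => j _.
case: (eqVneq i j) => [<-|ij].
  by rewrite setUid mpsi (part2 _ st ku1).
rewrite !m2 // !TS0_state // !tpsi !(TS_unif ku2) ?cards1 ?cards2 ?ij // expr1.
apply: ler_wpM2r; first by rewrite invr_ge0 ler0n.
rewrite lerD2l.
by have := TS_ge [set i; j] stp; rewrite cards2 ij.
Qed.
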